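(* Let $n\ge 2$, let $\mathcal{S}\subseteq(\mathbb{C}^d)^{\otimes n}$ be the permutation-symmetric subspace, and let $X,Y$ be $d\times d$ complex matrices. Suppose $|\psi\rangle\in\mathcal{S}$, $X_{(1)}|\psi\rangle\in\mathcal{S}$ and $Y_{(2)}|\psi\rangle\in\mathcal{S}$. Then $X_{(1)}Y_{(2)}|\psi\rangle\in\mathcal{S}$ if and only if $[X_{(1)},Y_{(1)}]|\psi\rangle=0$.
   Context: $\mathcal{S}$ is the set of vectors in $(\mathbb{C}^d)^{\otimes n}$ invariant under all permutations of the $n$ tensor factors. For a $d\times d$ matrix $X$ and $1\le k\le n$, $X_{(k)}$ denotes the operator on $(\mathbb{C}^d)^{\otimes n}$ acting as $X$ on the $k$-th tensor factor and as the identity on all others. $[P,Q]=PQ-QP$. *)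

(* Defs.v *)
(* scalars are algC (algebraic closure of Q, an algebraically
   closed numeric field standing for the complex numbers). *)
From HB Require Import structures.
From mathcomp Require Import all_boot all_order all_algebra all_fingroup all_field.
Set Implicit Arguments. Unset Strict Implicit. Unset Printing Implicit Defensive.
Import GRing.Theory.
Local Open Scope ring_scope.

(* Basis indices of (C^d)^{\otimes n}: maps from tensor positions to 'I_d. *)
Definition tidx (n d : nat) := {ffun 'I_n -> 'I_d}.

(* Vectors of (C^d)^{\otimes n}, given by their coordinates in the product basis. *)
Definition tvec (n d : nat) := {ffun tidx n d -> algC}.

Definition setidx (n d : nat) (i : tidx n d) (k : 'I_n) (j : 'I_d) : tidx n d :=
  [ffun m => if m == k then j else i m].

(* X_(k): X acting on the k-th tensor factor, identity elsewhere. *)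
Definition act_on (n d : nat) (k : 'I_n) (X : 'M[algC]_d) (psi : tvec n d) : tvec n d :=
  [ffun i : tidx n d => \sum_(j < d) X (i k) j * psi (setidx i k j)].

Definition symmetric_vec (n d : nat) (psi : tvec n d) : Prop :=
  forall (s : 'S_n) (i : tidx n d), psi [ffun m => i (s m)] = psi i.

(* The first and second tensor positions (0-based ordinals 0 and 1), for n >= 2. *)
Definition pos1 (n : nat) (hn : (2 <= n)%N) : 'I_n := Ordinal (ltnW hn).
Definition pos2 (n : nat) (hn : (2 <= n)%N) : 'I_n := Ordinal hn.

(* Main.v *)
Require Import Defs.
From mathcomp Require Import all_boot all_order all_algebra all_fingroup all_field.
Local Open Scope ring_scope.
Import GRing.Theory.

Section Aux.
Variables (n d : nat).

Lemma perm_act (k : 'I_n) (X : 'M[algC]_d) (v : tvec n d) (s : 'S_n) (i : tidx n d) :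
  symmetric_vec v ->
  act_on k X v [ffun m => i (s m)] = act_on (s k) X v i.
Proof.
move=> Hv; rewrite !ffunE; apply: eq_bigr => j _.
congr (_ * _).
rewrite -[RHS](Hv s); congr (v _); apply/ffunP => m; rewrite !ffunE.
by rewrite (inj_eq (@perm_inj _ s)).
Qed.

Lemma all_pos (k : 'I_n) (X : 'M[algC]_d) (v : tvec n d) :
  symmetric_vec v -> symmetric_vec (act_on k X v) ->
  forall c, act_on c X v = act_on k X v.
Proof.
move=> Hv HA c; apply/ffunP => i.
have -> : c = tperm k c k by rewrite tpermL.
by rewrite -perm_act // HA.
Qed.

Lemma comm_act (c k : 'I_n) (X Y : 'M[algC]_d) (v : tvec n d) :
  c != k -> act_on c X (act_on k Y v) = act_on k Y (act_on c X v).
Proof.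
move=> ck; apply/ffunP => i; rewrite !ffunE.
under eq_bigr => j _ do rewrite ffunE big_distrr.
under [RHS]eq_bigr => j _ do rewrite ffunE big_distrr.
rewrite exchange_big /=; apply: eq_bigr => j _; apply: eq_bigr => j' _.
have e1 : setidx i c j' k = i k by rewrite ffunE eq_sym (negbTE ck).
have e2 : setidx i k j c = i c by rewrite ffunE (negbTE ck).
rewrite e1 e2 !mulrA [X _ _ * Y _ _]mulrC; congr (_ * v _).
apply/ffunP => m; rewrite !ffunE.
case: (eqVneq m k) => [->|mk]; first by rewrite eq_sym (negbTE ck).
by [].
Qed.
End Aux.
Arguments perm_act {n d k X v s i}. Arguments all_pos {n d k X v}. Arguments comm_act {n d}.

Theorem lemma2 (d n : nat) (hn : (2 <= n)%N) (X Y : 'M[algC]_d) (psi : tvec n d) :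
  symmetric_vec psi ->
  symmetric_vec (act_on (pos1 hn) X psi) ->
  symmetric_vec (act_on (pos2 hn) Y psi) ->
  (symmetric_vec (act_on (pos1 hn) X (act_on (pos2 hn) Y psi)) <->
   act_on (pos1 hn) X (act_on (pos1 hn) Y psi)
     - act_on (pos1 hn) Y (act_on (pos1 hn) X psi) = 0).
Proof.
set a := pos1 hn; set b := pos2 hn => H0 HX HY.
have ab : a != b by [].
have ba : b != a by [].
have EX := all_pos H0 HX; have EY := all_pos H0 HY.
split => [Hphi | Hc].
  apply/eqP; rewrite subr_eq0; apply/eqP.
  have EB := all_pos HY Hphi.
  by rewrite (EY a) -(EB b) -(EY a) comm_act // (EX b).
move/eqP: Hc; rewrite subr_eq0 => /eqP Hc.
move=> s i; rewrite perm_act //.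
case: (eqVneq (s a) b) => [->|sb].
  by rewrite -(EY a) comm_act // (EX b) -Hc (EY a).
by rewrite comm_act // (EX (s a)) -comm_act.
Qed.
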